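(* Let $\Omega\subset\mathbb{R}^N$ be a bounded smooth domain, $0<\sigma<1$, $\lambda>0$, and let $(u,v)$ be any smooth solution of \[ -\Delta u=\lambda e^{v},\quad -\Delta v=\sigma\lambda e^{u}\ \text{in }\Omega,\qquad u=v=0\ \text{on }\partial\Omega, \] and let $(u_{\lambda,\sigma},v_{\lambda,\sigma})$ be the minimal solution of the same problem. Set $u_o=u-u_{\lambda,\sigma}$, $v_o=v-v_{\lambda,\sigma}$. Then (i) $v\le u$ in $\Omega$; (ii) $\sigma u\le v$ in $\Omega$; (iii) $\sigma u_o\le v_o$ in $\Omega$. Moreover, (iv) there exists $\lambda_1>0$ (independent of $\sigma$) such that for all $0<\lambda<\lambda_1$ and all $0<\sigma<1$ one has $v_o\le u_o$ in $\Omega$.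
   Context: The minimal solution is the componentwise pointwise smallest smooth solution; it exists whenever some smooth solution exists, and $u_o,v_o\ge0$. *)

(* Defs.v *)
From Stdlib Require Import Reals.
From mathcomp Require Import ssreflect ssrbool eqtype ssrnat fintype bigop.

Set Implicit Arguments.
Unset Strict Implicit.

Local Open Scope R_scope.

Definition Pt (N : nat) := 'I_N -> R.

Definition dist {N : nat} (x y : Pt N) : R :=
  sqrt (\big[Rplus/0]_(i < N) Rsqr (x i - y i)).

Definition upd {N : nat} (x : Pt N) (i : 'I_N) (t : R) : Pt N :=
  fun j => if j == i then t else x j.

Definition partial {N : nat} (i : 'I_N) (f : Pt N -> R) (x : Pt N) (l : R) : Prop :=
  derivable_pt_lim (fun t => f (upd x i t)) (x i) l.

Definition is_open {N : nat} (U : Pt N -> Prop) : Prop :=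
  forall x, U x -> exists r, 0 < r /\ forall y, dist x y < r -> U y.

Definition closure {N : nat} (U : Pt N -> Prop) (x : Pt N) : Prop :=
  forall eps, 0 < eps -> exists y, U y /\ dist x y < eps.

Definition boundary {N : nat} (U : Pt N -> Prop) (x : Pt N) : Prop :=
  closure U x /\ ~ U x.

Definition bounded {N : nat} (U : Pt N -> Prop) : Prop :=
  exists M, forall x, U x -> dist x (fun _ => 0) <= M.

Definition connected {N : nat} (U : Pt N -> Prop) : Prop :=
  forall A B : Pt N -> Prop, is_open A -> is_open B ->
    (forall x, U x -> A x \/ B x) ->
    (forall x, U x -> A x -> B x -> False) ->
    (forall x, U x -> A x) \/ (forall x, U x -> B x).

Definition cont_within {N : nat} (S : Pt N -> Prop) (f : Pt N -> R) (x : Pt N) : Prop :=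
  forall eps, 0 < eps -> exists delta, 0 < delta /\
    forall y, S y -> dist x y < delta -> Rabs (f y - f x) < eps.

(* D is a family of all iterated partial derivatives of f on the open set U
   (D [:: i1; ...; ik] = d_i1 ... d_ik f), each of which extends continuously
   to the closure of U. *)
Definition deriv_family {N : nat} (U : Pt N -> Prop) (f : Pt N -> R)
  (D : list 'I_N -> Pt N -> R) : Prop :=
  (forall x, closure U x -> D nil x = f x) /\
  (forall l i x, U x -> partial i (D l) x (D (cons i l) x)) /\
  (forall l x, closure U x -> cont_within (closure U) (D l) x).

Definition smooth_upto {N : nat} (U : Pt N -> Prop) (f : Pt N -> R) : Prop :=
  exists D, deriv_family U f D.

(* bounded smooth (C^infinity) domain: nonempty, open, connected, bounded,
   boundary locally the graph of a smooth function over a coordinate hyperplane,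
   with the domain lying on one side. *)
Definition smooth_bounded_domain {N : nat} (Om : Pt N -> Prop) : Prop :=
  (exists x, Om x) /\ is_open Om /\ connected Om /\ bounded Om /\
  forall p, boundary Om p ->
    exists (r : R) (i : 'I_N) (g : Pt N -> R) (s : R),
      0 < r /\ (s = 1 \/ s = -1) /\
      smooth_upto (fun _ => True) g /\
      (forall x t, g (upd x i t) = g x) /\
      (forall x, dist x p < r -> (Om x <-> 0 < s * (x i - g x))).

Definition laplacian_at {N : nat} (U : Pt N -> Prop) (f : Pt N -> R) (x : Pt N) (L : R) : Prop :=
  exists (g : 'I_N -> Pt N -> R) (l : 'I_N -> R),
    (forall i y, U y -> partial i f y (g i y)) /\
    (forall i, partial i (g i) x (l i)) /\
    L = \big[Rplus/0]_(i < N) l i.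

Definition is_solution {N : nat} (Om : Pt N -> Prop) (lam sigma : R)
  (u v : Pt N -> R) : Prop :=
  smooth_upto Om u /\ smooth_upto Om v /\
  (forall x, Om x -> laplacian_at Om u x (- (lam * exp (v x)))) /\
  (forall x, Om x -> laplacian_at Om v x (- (sigma * lam * exp (u x)))) /\
  (forall x, boundary Om x -> u x = 0 /\ v x = 0).

Definition is_minimal_solution {N : nat} (Om : Pt N -> Prop) (lam sigma : R)
  (u v : Pt N -> R) : Prop :=
  is_solution Om lam sigma u v /\
  forall u' v', is_solution Om lam sigma u' v' ->
    forall x, Om x -> u x <= u' x /\ v x <= v' x.

(* Main.v *)
From Pilot Require Import Defs.
From Stdlib Require Import Reals Lra Psatz Classical_Prop.
From mathcomp Require Import all_boot all_order all_algebra.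
From mathcomp Require Import all_classical all_reals topology normedtype derive.
From mathcomp Require Import Rstruct Rstruct_topology.
Import Order.TTheory GRing.Theory Num.Theory.
Local Open Scope ring_scope.
Local Open Scope classical_set_scope.

Lemma ball_coord N (v w : 'rV[R]_N) (e:R) : ball v e w -> forall i, `|v ord0 i - w ord0 i| < e.
Proof. by move=> H i; have := (H : mx_ball _ _ _ _ _ _ _).2 ord0 i. Qed.

Lemma coord_ball N (v w : 'rV[R]_N) (e:R) : 0 < e -> (forall i, `|v ord0 i - w ord0 i| < e) -> ball v e w.
Proof.
move=> e0 H; change (mx_ball _ _ _ _ v e w); split => // i j; rewrite (ord1 i); exact: H.
Qed.

Lemma evt_coord (N : nat) (K : Pt N -> Prop) (f : Pt N -> R) :
  (exists x, K x) ->
  (exists M : R, forall x, K x -> forall i, `|x i| <= M) ->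
  (forall x, (forall d : R, 0 < d -> exists y, K y /\ forall i, `|x i - y i| < d) -> K x) ->
  (forall x, K x -> forall eps : R, 0 < eps -> exists d : R, 0 < d /\
      forall y, K y -> (forall i, `|x i - y i| < d) -> `|f x - f y| < eps) ->
  exists x0, K x0 /\ forall y, K y -> f y <= f x0.
Proof.
move=> [x1 Kx1] [M HM] Kcl fc.
pose phi (v : 'rV[R]_N) : Pt N := fun i => v ord0 i.
pose A := [set v | K (phi v)].
have A0 : A !=set0 by exists (\row_i x1 i); rewrite /A /phi /=; 
  have -> : (fun i => (\row_i0 x1 i0) ord0 i) = x1 by apply: funext => i; rewrite mxE.
have clA : closed A.
  move=> v clv; apply: Kcl => d d0.
  have [w [Aw bw]] := clv _ (nbhsx_ballx v d d0).
  by exists (phi w); split => // i; apply: ball_coord.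
have cA : compact A.
  apply: (subclosed_compact clA (@rV_compact _ _ (fun=> `[(- M), M]) (fun=> @segment_compact _ _ _))).
  move=> v Av i /=; rewrite in_itv /= -ler_norml; exact: HM.
have cf : {within A, continuous (fun v => f (phi v))}.
  apply/subspace_continuousP => v Av.
  rewrite /from_subspace; apply/(@cvgrPdist_lt R R^o) => e e0.
  have [d [d0 Hd]] := fc _ Av e e0.
  rewrite /within; apply/nbhs_ballP; exists d => //= w bw Aw.
  apply: Hd => //; exact: ball_coord.
have [c Ac Hc] := EVT_max_rV A0 cA cf.
exists (phi c); split; first by move: Ac; rewrite inE.
move=> y Ky.
have -> : y = phi (\row_i y i) by apply: funext => i; rewrite /phi mxE.
by apply: Hc; rewrite inE /A /phi /=; have -> : (fun i => (\row_i0 y i0) ord0 i) = y by apply: funext => i; rewrite mxE.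
Qed.
Import Pilot.Defs.
Set Implicit Arguments.
Local Open Scope R_scope.

Lemma sum_le0 N (l : 'I_N -> R) : (forall i, l i <= 0) -> \big[Rplus/0]_(i<N) l i <= 0.
Proof.
move=> H; apply: (big_rec (fun s => s <= 0)); first lra.
move=> i s _ Hs; have := H i; lra.
Qed.

Lemma sum_ge0 N (P : pred 'I_N) (l : 'I_N -> R) : (forall i, 0 <= l i) -> 0 <= \big[Rplus/0]_(i<N | P i) l i.
Proof.
move=> H; apply: (big_rec (fun s => 0 <= s)); first lra.
move=> i s _ Hs; have := H i; lra.
Qed.

Lemma sum_lin N (l1 l2 : 'I_N -> R) a b :
  \big[Rplus/0]_(i<N) (a * l1 i + b * l2 i) = a * \big[Rplus/0]_(i<N) l1 i + b * \big[Rplus/0]_(i<N) l2 i.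
Proof.
apply: (big_rec3 (fun x y z => x = a * y + b * z)); first ring.
move=> i x y z _ ->; ring.
Qed.

Lemma coord_le_dist N (x y : Pt N) i : Rabs (x i - y i) <= dist x y.
Proof.
rewrite /dist (bigD1 i) //=.
rewrite -sqrt_Rsqr_abs; apply: sqrt_le_1_alt.
have := @sum_ge0 N (fun j => j != i) (fun j => Rsqr (x j - y j)) (fun j => Rle_0_sqr _).
move=> h; rewrite -{1}(Rplus_0_r (Rsqr _)); exact: Rplus_le_compat_l.
Qed.

Lemma iter_plus n c : iter n (Rplus c) 0 = INR n * c.
Proof. elim: n => [|n IH]; first (simpl; ring). rewrite S_INR iterS IH; ring. Qed.

Lemma dist_lt_coord N (x y : Pt N) eps : 0 < eps ->
  (forall i, Rabs (x i - y i) < eps / (INR N + 1)) -> dist x y < eps.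
Proof.
move=> e0 H.
have N0 : 0 <= INR N := pos_INR N.
set d := eps / (INR N + 1).
have d0 : 0 < d by rewrite /d; apply: Rdiv_lt_0_compat; lra.
have Hs : \big[Rplus/0]_(i<N) Rsqr (x i - y i) <= \big[Rplus/0]_(i<N) Rsqr d.
  apply: (big_rec2 (fun a b => a <= b)); first lra.
  move=> i a b _ Hab.
  have := H i => Hi.
  have : Rsqr (x i - y i) <= Rsqr d.
    rewrite Rsqr_abs; apply: Rsqr_incr_1; [rewrite /d; lra | exact: Rabs_pos | ]; lra.
  lra.
rewrite big_const_ord iter_plus in Hs.
have Hd : eps = d * (INR N + 1) by rewrite /d; field; lra.
have Hlt : INR N * Rsqr d < Rsqr eps.
  rewrite Hd Rsqr_mult; rewrite /Rsqr.
  have : 0 < d * d by nra.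
  nra.
rewrite /dist -(sqrt_Rsqr eps); last lra.
apply: sqrt_lt_1_alt; split; last lra.
apply: (@sum_ge0 N xpredT) => i; apply: Rle_0_sqr.
Qed.

Lemma dist_refl N (x : Pt N) : dist x x = 0.
Proof.
rewrite /dist.
have -> : \big[Rplus/0]_(i<N) Rsqr (x i - x i) = 0.
  apply: (big_rec (fun s => s = 0)) => // i s _ ->; rewrite Rminus_diag Rsqr_0; ring.
exact: sqrt_0.
Qed.

Lemma closure_sub N (Om : Pt N -> Prop) x : Om x -> closure Om x.
Proof. move=> Ox eps e0; exists x; split => //; rewrite dist_refl; lra. Qed.

Lemma closure_coord N (Om : Pt N -> Prop) x :
  closure Om x <-> (forall d, 0 < d -> exists y, Om y /\ forall i, Rabs (x i - y i) < d).
Proof.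
split.
  move=> H d d0; have [y [Oy Hy]] := H d d0; exists y; split => // i.
  have := coord_le_dist x y i; lra.
move=> H eps e0.
have N0 : 0 <= INR N := pos_INR N.
have d0 : 0 < eps / (INR N + 1) by apply: Rdiv_lt_0_compat; lra.
have [y [Oy Hy]] := H _ d0; exists y; split => //; exact: dist_lt_coord.
Qed.

Lemma evt_std N (K : Pt N -> Prop) (f : Pt N -> R) :
  (exists x, K x) ->
  (exists M : R, forall x, K x -> forall i, Rabs (x i) <= M) ->
  (forall x, (forall d : R, 0 < d -> exists y, K y /\ forall i, Rabs (x i - y i) < d) -> K x) ->
  (forall x, K x -> forall eps : R, 0 < eps -> exists d : R, 0 < d /\
      forall y, K y -> (forall i, Rabs (x i - y i) < d) -> Rabs (f x - f y) < eps) ->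
  exists x0, K x0 /\ forall y, K y -> f y <= f x0.
Proof.
move=> H1 [M HM] H3 H4.
have G1 : exists M : R, forall x, K x -> forall i, (`|x i| <= M)%O.
  by exists M => x Kx i; apply/RleP; apply: HM.
have G2 : (forall x, (forall d : R, (0 < d)%O -> exists y, K y /\ forall i, (`|x i - y i| < d)%O) -> K x).
  move=> x Hx; apply: H3 => d d0.
  have [y [Ky Hy]] := Hx d (introT RltP d0).
  by exists y; split => // i; apply/RltP.
have G3 : (forall x, K x -> forall eps : R, (0 < eps)%O -> exists d : R, (0 < d)%O /\
      forall y, K y -> (forall i, (`|x i - y i| < d)%O) -> (`|f x - f y| < eps)%O).
  move=> x Kx eps /RltP e0.
  have [d [d0 Hd]] := H4 x Kx eps e0.
  exists d; split; first exact/RltP.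
  move=> y Ky Hy; apply/RltP; apply: Hd => // i; exact/RltP.
have [x0 [Kx0 Hx0]] := @evt_coord N K f H1 G1 G2 G3.
exists x0; split => // y Ky; apply/RleP; exact: Hx0.
Qed.

Lemma cont_lin N (S : Pt N -> Prop) (f g : Pt N -> R) a b c x :
  cont_within S f x -> cont_within S g x -> cont_within S (fun y => a * f y + b * g y + c) x.
Proof.
move=> hf hg eps e0.
have k0 : 0 < Rabs a + Rabs b + 1 by have := Rabs_pos a; have := Rabs_pos b; lra.
set e' := eps / (Rabs a + Rabs b + 1).
have e'0 : 0 < e' by apply: Rdiv_lt_0_compat.
have [d1 [d10 H1]] := hf e' e'0.
have [d2 [d20 H2]] := hg e' e'0.
exists (Rmin d1 d2); split; first by apply: Rmin_pos.
move=> y Sy hy.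
have := H1 y Sy (Rlt_le_trans _ _ _ hy (Rmin_l _ _)) => h1.
have := H2 y Sy (Rlt_le_trans _ _ _ hy (Rmin_r _ _)) => h2.
have -> : a * f y + b * g y + c - (a * f x + b * g x + c) = a * (f y - f x) + b * (g y - g x) by ring.
apply: (Rle_lt_trans _ _ _ (Rabs_triang _ _)).
rewrite !Rabs_mult.
have ha := Rabs_pos a; have hb := Rabs_pos b.
have hfy := Rabs_pos (f y - f x); have hgy := Rabs_pos (g y - g x).
have : Rabs a * Rabs (f y - f x) <= Rabs a * e' by apply: Rmult_le_compat_l; lra.
have : Rabs b * Rabs (g y - g x) <= Rabs b * e' by apply: Rmult_le_compat_l; lra.
have Heps : eps = e' * (Rabs a + Rabs b + 1) by rewrite /e'; field; lra.
nra.
Qed.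

Lemma closure_evt N (Om : Pt N -> Prop) (w : Pt N -> R) :
  (exists x, Om x) -> bounded Om ->
  (forall x, closure Om x -> cont_within (closure Om) w x) ->
  exists x0, closure Om x0 /\ forall y, closure Om y -> w y <= w x0.
Proof.
move=> [x1 Ox1] [M HM] hc.
apply: evt_std.
- by exists x1; apply: closure_sub.
- exists (M + 1) => x cx i.
  have [y [Oy hy]] := cx 1 Rlt_0_1.
  have h1 := coord_le_dist x y i.
  have h2 := coord_le_dist y (fun _ => 0) i.
  have h3 := HM y Oy.
  have := Rabs_triang (x i - y i) (y i).
  have -> : x i - y i + y i = x i by ring.
  rewrite Rminus_0_r in h2.
  lra.
- move=> x hx; apply/closure_coord => d d0.
  have d20 : 0 < d / 2 by lra.
  have [y [cy hy]] := hx _ d20.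
  have [z [Oz hz]] := (iffLR (closure_coord Om y)) cy _ d20.
  exists z; split => // i.
  have := Rabs_triang (x i - y i) (y i - z i).
  have -> : x i - y i + (y i - z i) = x i - z i by ring.
  have := hy i; have := hz i; lra.
- move=> x cx eps e0.
  have [del [del0 hd]] := hc x cx eps e0.
  have N0 : 0 <= INR N := pos_INR N.
  exists (del / (INR N + 1)); split; first by apply: Rdiv_lt_0_compat; lra.
  move=> y cy hy.
  rewrite Rabs_minus_sym; apply: hd => //; exact: dist_lt_coord.
Qed.

Lemma upd_same N (x : Pt N) i : upd x i (x i) = x.
Proof. apply: funext => j; rewrite /upd; case: eqP => [->|_] //. Qed.

Lemma upd_upd N (x : Pt N) i t s : upd (upd x i t) i s = upd x i s.
Proof. apply: funext => j; rewrite /upd; case: (j == i) => //. Qed.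

Lemma upd_at N (x : Pt N) i t : upd x i t i = t.
Proof. by rewrite /upd eqxx. Qed.

Lemma upd_coord N (x : Pt N) i t j : Rabs (x j - upd x i t j) <= Rabs (x i - t).
Proof.
rewrite /upd; case: eqP => [->|_]; first lra.
rewrite Rminus_diag Rabs_R0; exact: Rabs_pos.
Qed.

Lemma second_deriv_max (phi psi : R -> R) a rho l : 0 < rho ->
  (forall t, Rabs (t - a) < rho -> derivable_pt_lim phi t (psi t)) ->
  derivable_pt_lim psi a l ->
  (forall t, Rabs (t - a) < rho -> phi t <= phi a) -> l <= 0.
Proof.
move=> r0 hphi hpsi hmax.
have hpa : psi a = 0.
  have ha : Rabs (a - a) < rho by rewrite Rminus_diag Rabs_R0.
  pose pr := exist (fun l => derivable_pt_abs phi a l) (psi a) (hphi a ha) : derivable_pt phi a.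
  have := @deriv_maximum phi (a - rho) (a + rho) a pr ltac:(lra) ltac:(lra).
  apply => t h1 h2; apply: hmax; apply: Rabs_def1; lra.
case: (Rle_lt_dec l 0) => // hl; exfalso.
have l20 : 0 < l / 2 by lra.
have [del hdel] := hpsi _ l20.
have hd0 := cond_pos del.
set h0 := Rmin del rho / 2.
have h00 : 0 < h0 by rewrite /h0; have := Rmin_pos _ _ hd0 r0; lra.
have h0d : h0 < del by rewrite /h0; have := Rmin_l del rho; lra.
have h0r : h0 < rho by rewrite /h0; have := Rmin_r del rho; lra.
have [c [hc1 hc2]] : exists c, phi (a + h0) - phi a = psi c * (a + h0 - a) /\ a < c < a + h0.
  apply: MVT_cor2; first lra.
  move=> c hc; apply: hphi; apply: Rabs_def1; lra.
have hpc : 0 < psi c.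
  have hne : c - a <> 0 by lra.
  have hab : Rabs (c - a) < del by apply: Rabs_def1; lra.
  have := hdel _ hne hab.
  have -> : a + (c - a) = c by ring.
  rewrite hpa Rminus_0_r => hq.
  have hq2 : l / 2 < psi c / (c - a).
    have := Rabs_def2 _ _ hq; lra.
  have hca : 0 < c - a by lra.
  have -> : psi c = psi c / (c - a) * (c - a) by field; lra.
  apply: Rmult_lt_0_compat; lra.
have := hmax (a + h0) ltac:(apply: Rabs_def1; lra).
have : 0 < psi c * (a + h0 - a) by apply: Rmult_lt_0_compat; lra.
lra.
Qed.

Lemma lap_max N (Om : Pt N -> Prop) (w : Pt N -> R) x0 L :
  is_open Om -> Om x0 -> (forall y, Om y -> w y <= w x0) -> laplacian_at Om w x0 L -> L <= 0.
Proof.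
move=> hop Ox0 hmax [g [l [H1 [H2 ->]]]].
apply: sum_le0 => i.
have [r [r0 hr]] := hop x0 Ox0.
have N0 : 0 <= INR N := pos_INR N.
have rho0 : 0 < r / (INR N + 1) by apply: Rdiv_lt_0_compat; lra.
have hin : forall t, Rabs (t - x0 i) < r / (INR N + 1) -> Om (upd x0 i t).
  move=> t ht; apply: hr; apply: dist_lt_coord => // j.
  apply: (Rle_lt_trans _ _ _ (upd_coord x0 i t j)); rewrite Rabs_minus_sym; lra.
apply: (@second_deriv_max (fun t => w (upd x0 i t)) (fun t => g i (upd x0 i t)) (x0 i) _ _ rho0).
- move=> t ht.
  have := H1 i _ (hin t ht); rewrite /partial upd_at.
  have -> : (fun s => w (upd (upd x0 i t) i s)) = (fun s => w (upd x0 i s)).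
    by apply: funext => s; rewrite upd_upd.
  done.
- exact: H2.
- move=> t ht; rewrite upd_same; exact: hmax (hin t ht).
Qed.

Lemma maxprin N (Om : Pt N -> Prop) (w L : Pt N -> R) :
  smooth_bounded_domain Om ->
  (forall x, closure Om x -> cont_within (closure Om) w x) ->
  (forall x, boundary Om x -> w x <= 0) ->
  (forall x, Om x -> laplacian_at Om w x (L x)) ->
  (forall x, Om x -> 0 < w x -> L x <= 0 -> False) ->
  forall x, Om x -> w x <= 0.
Proof.
move=> [hne [hop [_ [hb _]]]] hc hbd hlap hcon x Ox.
have [x0 [cx0 hx0]] := closure_evt hne hb hc.
have := hx0 x (@closure_sub _ Om x Ox).
case: (Rle_lt_dec (w x0) 0) => hw; first lra.
case: (Classical_Prop.classic (Om x0)) => Ox0; last first.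
  by have := hbd x0 (conj cx0 Ox0); lra.
exfalso; apply: (hcon x0 Ox0 hw).
apply: (lap_max hop Ox0) (hlap x0 Ox0).
move=> y Oy; exact: hx0 y (@closure_sub _ Om y Oy).
Qed.

Lemma exp_le x y : x <= y -> exp x <= exp y.
Proof. case/Rle_lt_or_eq_dec => [h|->]; [left; exact: exp_increasing | right; done]. Qed.

Lemma exp_le_inv x y : exp x <= exp y -> x <= y.
Proof. move=> h; case: (Rle_lt_dec x y) => // h'; have := exp_increasing _ _ h'; lra. Qed.

Lemma pos_mul_le0 k z : 0 < k -> k * z <= 0 -> z <= 0.
Proof. move=> hk hz; case: (Rle_lt_dec z 0) => // h; have := Rmult_lt_0_compat _ _ hk h; lra. Qed.

Lemma lap_lin N (Om : Pt N -> Prop) (f g : Pt N -> R) x L1 L2 a b c :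
  laplacian_at Om f x L1 -> laplacian_at Om g x L2 ->
  laplacian_at Om (fun y => a * f y + b * g y + c) x (a * L1 + b * L2).
Proof.
move=> [g1 [l1 [A1 [B1 ->]]]] [g2 [l2 [A2 [B2 ->]]]].
exists (fun i y => a * g1 i y + b * g2 i y), (fun i => a * l1 i + b * l2 i).
split; [|split].
- move=> i y Oy; rewrite /partial.
  have := derivable_pt_lim_plus _ _ _ _ _
    (derivable_pt_lim_plus _ _ _ _ _ (derivable_pt_lim_scal _ a _ _ (A1 i y Oy))
       (derivable_pt_lim_scal _ b _ _ (A2 i y Oy))) (derivable_pt_lim_const c (y i)).
  by rewrite Rplus_0_r.
- move=> i; rewrite /partial.
  have := derivable_pt_lim_plus _ _ _ _ _ (derivable_pt_lim_scal _ a _ _ (B1 i))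
       (derivable_pt_lim_scal _ b _ _ (B2 i)).
  done.
- by rewrite sum_lin.
Qed.

Lemma smooth_cont N (Om : Pt N -> Prop) u :
  smooth_upto Om u -> forall x, closure Om x -> cont_within (closure Om) u x.
Proof.
move=> [D [hD0 [_ hD2]]] x cx eps e0.
have [d [d0 hd]] := hD2 nil x cx eps e0.
exists d; split => // y cy hy; rewrite -(hD0 y cy) -(hD0 x cx); exact: hd.
Qed.

Lemma mp2 N (Om : Pt N -> Prop) (f g Lf Lg : Pt N -> R) a b c :
  smooth_bounded_domain Om ->
  (forall x, closure Om x -> cont_within (closure Om) f x) ->
  (forall x, closure Om x -> cont_within (closure Om) g x) ->
  (forall x, Om x -> laplacian_at Om f x (Lf x)) ->
  (forall x, Om x -> laplacian_at Om g x (Lg x)) ->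
  (forall x, boundary Om x -> a * f x + b * g x + c <= 0) ->
  (forall x, Om x -> 0 < a * f x + b * g x + c -> a * Lf x + b * Lg x <= 0 -> False) ->
  forall x, Om x -> a * f x + b * g x + c <= 0.
Proof.
move=> hOm cf cg lf lg hb hc.
apply: (@maxprin N Om (fun y => a * f y + b * g y + c) (fun y => a * Lf y + b * Lg y) hOm) => //.
- move=> x cx; apply: cont_lin; [exact: cf | exact: cg].
- move=> x Ox; apply: lap_lin; [exact: lf | exact: lg].
Qed.

Section Sol.
Variables (N : nat) (Om : Pt N -> Prop) (hOm : smooth_bounded_domain Om).
Variables (lam sigma : R) (u v : Pt N -> R).
Hypotheses (hs0 : 0 < sigma) (hs1 : sigma < 1) (hl : 0 < lam).
Hypothesis hsol : is_solution Om lam sigma u v.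

Let cu := smooth_cont hsol.1.
Let cv := smooth_cont hsol.2.1.
Let lu := hsol.2.2.1.
Let lv := hsol.2.2.2.1.
Let bd := hsol.2.2.2.2.


Lemma sol_u_pos x : Om x -> 0 <= u x.
Proof.
move=> Ox.
suff : -1 * u x + 0 * v x + 0 <= 0 by lra.
apply: (@mp2 N Om u v _ _ (-1) 0 0 hOm cu cv lu lv) => // y.
- by move=> /bd [-> ->]; lra.
- move=> Oy _; have := exp_pos (v y) => he.
  have : 0 < lam * exp (v y) by apply: Rmult_lt_0_compat.
  lra.
Qed.

Lemma sol_i x : Om x -> v x <= u x.
Proof.
move=> Ox.
suff : -1 * u x + 1 * v x + 0 <= 0 by lra.
apply: (@mp2 N Om u v _ _ (-1) 1 0 hOm cu cv lu lv) => // y.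
- by move=> /bd [-> ->]; lra.
- move=> Oy hw hL.
  have h1 : exp (v y) - sigma * exp (u y) <= 0.
    apply: (pos_mul_le0 hl).
    have -> : lam * (exp (v y) - sigma * exp (u y)) = -1 * - (lam * exp (v y)) + 1 * - (sigma * lam * exp (u y)) by ring.
    exact: hL.
  have he := exp_pos (u y).
  have : sigma * exp (u y) < exp (u y) by nra.
  move=> h2; have := exp_lt_inv (v y) (u y) ltac:(lra); lra.
Qed.

Lemma sol_ii x : Om x -> sigma * u x <= v x.
Proof.
move=> Ox.
suff : sigma * u x + -1 * v x + 0 <= 0 by lra.
apply: (@mp2 N Om u v _ _ sigma (-1) 0 hOm cu cv lu lv) => // y.
- by move=> /bd [-> ->]; lra.
- move=> Oy hw hL.
  have h1 : exp (u y) - exp (v y) <= 0.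
    apply: (pos_mul_le0 (Rmult_lt_0_compat _ _ hs0 hl)).
    have -> : sigma * lam * (exp (u y) - exp (v y)) = sigma * - (lam * exp (v y)) + -1 * - (sigma * lam * exp (u y)) by ring.
    exact: hL.
  have h2 := exp_le_inv (u y) (v y) ltac:(lra).
  have h3 := sol_u_pos Oy.
  nra.
Qed.

Lemma sol_A x : Om x -> sigma * exp (u x) <= exp (v x).
Proof.
move=> Ox.
have hln : ln sigma < 0 by rewrite -ln_1; apply: ln_increasing.
suff : 1 * u x + -1 * v x + ln sigma <= 0.
  move=> h; rewrite -{1}(exp_ln sigma hs0) -exp_plus; apply: exp_le; lra.
apply: (@mp2 N Om u v _ _ 1 (-1) (ln sigma) hOm cu cv lu lv) => // y.
- by move=> /bd [-> ->]; lra.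
- move=> Oy hw hL.
  have h1 : sigma * exp (u y) - exp (v y) <= 0.
    apply: (pos_mul_le0 hl).
    have -> : lam * (sigma * exp (u y) - exp (v y)) = 1 * - (lam * exp (v y)) + -1 * - (sigma * lam * exp (u y)) by ring.
    exact: hL.
  have : exp (v y) < exp (u y + ln sigma) by apply: exp_increasing; lra.
  rewrite exp_plus exp_ln //; lra.
Qed.

End Sol.

Lemma exp_split a b : exp a = exp b * exp (a - b).
Proof. by rewrite -exp_plus; f_equal; ring. Qed.

Unset Implicit Arguments.

Theorem mainTheorem4 (N : nat) (Om : Pt N -> Prop) (hOm : smooth_bounded_domain Om) :
  (forall (sigma lam : R) (u v um vm : Pt N -> R),
     0 < sigma -> sigma < 1 -> 0 < lam ->
     is_solution Om lam sigma u v ->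
     is_minimal_solution Om lam sigma um vm ->
     forall x, Om x ->
       v x <= u x /\
       sigma * u x <= v x /\
       sigma * (u x - um x) <= v x - vm x) /\
  (exists lam1 : R, 0 < lam1 /\
     forall (lam sigma : R) (u v um vm : Pt N -> R),
       0 < lam -> lam < lam1 -> 0 < sigma -> sigma < 1 ->
       is_solution Om lam sigma u v ->
       is_minimal_solution Om lam sigma um vm ->
       forall x, Om x -> v x - vm x <= u x - um x).
Proof.
split.
- move=> sigma lam u v um vm hs0 hs1 hl hsol [hmsol hmin] x Ox.
  split; first exact: (sol_i hOm hs1 hl hsol x Ox).
  split; first exact: (sol_ii hOm hs0 hs1 hl hsol x Ox).
  have cu := smooth_cont hsol.1; have cv := smooth_cont hsol.2.1.
  have cum := smooth_cont hmsol.1; have cvm := smooth_cont hmsol.2.1.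
  have lu := hsol.2.2.1; have lv := hsol.2.2.2.1; have bd := hsol.2.2.2.2.
  have lum := hmsol.2.2.1; have lvm := hmsol.2.2.2.1; have bdm := hmsol.2.2.2.2.
  pose f1 := fun y => sigma * u y + -1 * v y + 0.
  pose f2 := fun y => - sigma * um y + 1 * vm y + 0.
  pose L1 := fun y => sigma * - (lam * exp (v y)) + -1 * - (sigma * lam * exp (u y)).
  pose L2 := fun y => - sigma * - (lam * exp (vm y)) + 1 * - (sigma * lam * exp (um y)).
  suff : 1 * f1 x + 1 * f2 x + 0 <= 0 by rewrite /f1 /f2; lra.
  apply: (mp2 L1 L2 hOm) => // y.
  + move=> cy; apply: cont_lin; [exact: cu | exact: cv].
  + move=> cy; apply: cont_lin; [exact: cum | exact: cvm].
  + move=> Oy; apply: lap_lin; [exact: lu | exact: lv].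
  + move=> Oy; apply: lap_lin; [exact: lum | exact: lvm].
  + move=> hy; have [h1 h2] := bd y hy; have [h3 h4] := bdm y hy.
    rewrite /f1 /f2 h1 h2 h3 h4; lra.
  + move=> Oy hw hL.
    rewrite /f1 /f2 in hw; rewrite /L1 /L2 in hL.
    have [hu hv] := hmin u v hsol y Oy.
    have hvm := sol_i hOm hs1 hl hmsol y Oy.
    have key : exp (u y) - exp (um y) - exp (v y) + exp (vm y) <= 0.
      apply: (pos_mul_le0 (Rmult_lt_0_compat _ _ hs0 hl)).
      have -> : sigma * lam * (exp (u y) - exp (um y) - exp (v y) + exp (vm y)) =
        1 * (sigma * - (lam * exp (v y)) + -1 * - (sigma * lam * exp (u y))) +
        1 * (- sigma * - (lam * exp (vm y)) + 1 * - (sigma * lam * exp (um y))) by ring.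
      exact: hL.
    have hsp : sigma * (u y - um y) <= u y - um y by nra.
    have hqp : v y - vm y < u y - um y by lra.
    rewrite (exp_split (u y) (um y)) (exp_split (v y) (vm y)) in key.
    have hq1 : 0 <= exp (v y - vm y) - 1.
      have := @exp_le 0 (v y - vm y) ltac:(lra); rewrite exp_0; lra.
    have h1 : exp (vm y) * (exp (v y - vm y) - 1) <= exp (um y) * (exp (v y - vm y) - 1).
      apply: Rmult_le_compat_r => //; exact: exp_le.
    have h2 : exp (um y) * (exp (v y - vm y) - 1) < exp (um y) * (exp (u y - um y) - 1).
      apply: Rmult_lt_compat_l; first exact: exp_pos.
      have := exp_increasing _ _ hqp; lra.
    lra.
- exists 1; split; first lra.
  move=> lam sigma u v um vm hl _ hs0 hs1 hsol [hmsol hmin] x Ox.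
  have cu := smooth_cont hsol.1; have cv := smooth_cont hsol.2.1.
  have cum := smooth_cont hmsol.1; have cvm := smooth_cont hmsol.2.1.
  have lu := hsol.2.2.1; have lv := hsol.2.2.2.1; have bd := hsol.2.2.2.2.
  have lum := hmsol.2.2.1; have lvm := hmsol.2.2.2.1; have bdm := hmsol.2.2.2.2.
  pose f1 := fun y => -1 * u y + 1 * v y + 0.
  pose f2 := fun y => 1 * um y + -1 * vm y + 0.
  pose L1 := fun y => -1 * - (lam * exp (v y)) + 1 * - (sigma * lam * exp (u y)).
  pose L2 := fun y => 1 * - (lam * exp (vm y)) + -1 * - (sigma * lam * exp (um y)).
  suff : 1 * f1 x + 1 * f2 x + 0 <= 0 by rewrite /f1 /f2; lra.
  apply: (mp2 L1 L2 hOm) => // y.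
  + move=> cy; apply: cont_lin; [exact: cu | exact: cv].
  + move=> cy; apply: cont_lin; [exact: cum | exact: cvm].
  + move=> Oy; apply: lap_lin; [exact: lu | exact: lv].
  + move=> Oy; apply: lap_lin; [exact: lum | exact: lvm].
  + move=> hy; have [h1 h2] := bd y hy; have [h3 h4] := bdm y hy.
    rewrite /f1 /f2 h1 h2 h3 h4; lra.
  + move=> Oy hw hL.
    rewrite /f1 /f2 in hw; rewrite /L1 /L2 in hL.
    have [hu hv] := hmin u v hsol y Oy.
    have hA := sol_A hOm hs0 hs1 hl hmsol y Oy.
    have key : exp (v y) - exp (vm y) - sigma * (exp (u y) - exp (um y)) <= 0.
      apply: (pos_mul_le0 hl).
      have -> : lam * (exp (v y) - exp (vm y) - sigma * (exp (u y) - exp (um y))) =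
        1 * (-1 * - (lam * exp (v y)) + 1 * - (sigma * lam * exp (u y))) +
        1 * (1 * - (lam * exp (vm y)) + -1 * - (sigma * lam * exp (um y))) by ring.
      exact: hL.
    have hpq : u y - um y < v y - vm y by lra.
    rewrite (exp_split (u y) (um y)) (exp_split (v y) (vm y)) in key.
    have hp1 : 0 <= exp (u y - um y) - 1.
      have := @exp_le 0 (u y - um y) ltac:(lra); rewrite exp_0; lra.
    have h1 : sigma * exp (um y) * (exp (u y - um y) - 1) <= exp (vm y) * (exp (u y - um y) - 1).
      exact: Rmult_le_compat_r.
    have h2 : exp (vm y) * (exp (u y - um y) - 1) < exp (vm y) * (exp (v y - vm y) - 1).
      apply: Rmult_lt_compat_l; first exact: exp_pos.
      have := exp_increasing _ _ hpq; lra.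
    lra.
Qed.
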